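(* Let $0<p<1$ and $\alpha>-1$. For integers $k\ge1$ and $B$ with $1\le B\le k$, set $$p_{k+1}=1-\frac{(1-p)(k+\alpha B)}{k(1+\alpha p)+\alpha(1-p)}.$$ If $p\ge 1/2$, then $p_{k+1}\ge 0$ for all integers $k\ge 1$ and all integers $1\le B\le k$. If $p<1/2$, then $p_{k+1}\ge0$ for all integers $k\ge1$ and all integers $1\le B\le k$ if and only if $$\alpha\le \frac{p}{1-2p}.$$
   Context: This concerns the urn transfer process ($p_k$-model): urns $urn_1,urn_2,\dots$, $F_i(k)$ balls in $urn_i$ after $k$ steps, starting from a single ball in $urn_1$; at stage $k+1$ a new ball is added to $urn_1$ with probability $p_{k+1}=1-\frac{(1-p)\sum_i (i+\alpha)F_i(k)}{k(1+\alpha p)+\alpha(1-p)}$, otherwise a ball is moved from $urn_i$ to $urn_{i+1}$, $urn_i$ chosen with probability $\frac{(1-p)(i+\alpha)F_i(k)}{k(1+\alpha p)+\alpha(1-p)}$. Since $\sum_i iF_i(k)=k$, writing $B(k)=\sum_iF_i(k)$ (which satisfies $1\le B(k)\le k$) gives the formula for $p_{k+1}$ in the claim with $B=B(k)$; the process is well defined at stage $k+1$ exactly when $p_{k+1}\ge0$ (note $p_{k+1}<1$ always). *)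

(* Defs.v *)
From Stdlib Require Import Reals.
Open Scope R_scope.

Definition pnext (p alpha : R) (k B : nat) : R :=
  1 - (1 - p) * (INR k + alpha * INR B)
      / (INR k * (1 + alpha * p) + alpha * (1 - p)).

Definition all_nonneg (p alpha : R) : Prop :=
  forall k B : nat, (1 <= k)%nat -> (1 <= B)%nat -> (B <= k)%nat ->
    0 <= pnext p alpha k B.

(* Main.v *)
Require Import Defs.
From Stdlib Require Import Reals Lra Lia Psatz.
Open Scope R_scope.

Lemma key (p alpha : R) (k B : nat) : 0 < p -> p < 1 -> -1 < alpha -> (1 <= k)%nat ->
  (0 <= pnext p alpha k B <->
   0 <= p * INR k * (1 + alpha) + alpha * (1 - p) * (1 - INR B)).
Proof.
  intros hp0 hp1 ha hk.
  assert (Hk : 1 <= INR k) by (apply (le_INR 1) in hk; simpl in hk; lra).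
  set (D := INR k * (1 + alpha * p) + alpha * (1 - p)).
  assert (HD : 0 < D).
  { unfold D. assert (0 < 1 + alpha * p) by nra. nra. }
  unfold pnext; fold D.
  assert (E : 1 - (1 - p) * (INR k + alpha * INR B) / D
     = (p * INR k * (1 + alpha) + alpha * (1 - p) * (1 - INR B)) / D).
  { unfold D in *. field. lra. }
  rewrite E. split; intro H.
  - apply Rmult_le_compat_r with (r := D) in H; [|lra].
    unfold Rdiv in H. rewrite Rmult_assoc, Rinv_l, Rmult_1_r in H by lra. lra.
  - unfold Rdiv. apply Rmult_le_pos; [lra|]. left. apply Rinv_0_lt_compat. lra.
Qed.

Theorem lemmaA2 (p alpha : R) (hp0 : 0 < p) (hp1 : p < 1) (ha : -1 < alpha) :
  (1 / 2 <= p -> all_nonneg p alpha) /\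
  (p < 1 / 2 -> (all_nonneg p alpha <-> alpha <= p / (1 - 2 * p))).
Proof.
  split.
  - intros hp k B hk hB hBk. apply key; auto.
    assert (Hk : 1 <= INR k) by (apply (le_INR 1) in hk; simpl in hk; lra).
    assert (HB : 1 <= INR B) by (apply (le_INR 1) in hB; simpl in hB; lra).
    assert (HBk : INR B <= INR k) by (apply le_INR; lia).
    destruct (Rle_dec 0 alpha).
    + assert (alpha * (INR k - INR B) >= 0) by nra.
      assert (alpha * (INR k - INR B) * (1 - p) >= 0) by nra.
      assert (alpha * ((2*p - 1) * INR k) >= 0).
      { apply Rle_ge, Rmult_le_pos; [lra|]. apply Rmult_le_pos; lra. }
      nra.
    + assert (alpha * (1 - p) * (1 - INR B) >= 0).
      { replace (alpha * (1 - p) * (1 - INR B)) with ((- alpha) * (1 - p) * (INR B - 1)) by ring.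
        apply Rle_ge, Rmult_le_pos; [apply Rmult_le_pos|]; lra. }
      assert (p * INR k * (1 + alpha) >= 0).
      { apply Rle_ge, Rmult_le_pos; [apply Rmult_le_pos|]; lra. }
      lra.
  - intros hp. split.
    + intros H. destruct (Rle_dec alpha (p / (1 - 2 * p))) as [|Hn]; auto.
      exfalso. apply Rnot_le_lt in Hn.
      assert (Hc : p < alpha * (1 - 2 * p)).
      { apply Rmult_lt_compat_r with (r := 1 - 2*p) in Hn; [|lra].
        unfold Rdiv in Hn. rewrite Rmult_assoc, Rinv_l, Rmult_1_r in Hn by lra. lra. }
      destruct (INR_archimed (alpha * (1 - 2 * p) - p) (alpha * (1 - p))) as [n Hn']; [lra|].
      specialize (H (S n) (S n) ltac:(lia) ltac:(lia) ltac:(lia)).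
      apply key in H; [|lra|lra|lra|lia].
      rewrite S_INR in H.
      replace (p * (INR n + 1) * (1 + alpha) + alpha * (1 - p) * (1 - (INR n + 1)))
        with (alpha * (1 - p) - INR n * (alpha * (1 - 2 * p) - p) - (alpha * (1 - 2 * p) - p)) in H by ring.
      lra.
    + intros Ha k B hk hB hBk. apply key; auto.
      assert (Hk : 1 <= INR k) by (apply (le_INR 1) in hk; simpl in hk; lra).
      assert (HB : 1 <= INR B) by (apply (le_INR 1) in hB; simpl in hB; lra).
      assert (HBk : INR B <= INR k) by (apply le_INR; lia).
      destruct (Rle_dec 0 alpha).
      * assert (Hc : alpha * (1 - 2 * p) <= p).
        { apply Rmult_le_compat_r with (r := 1 - 2*p) in Ha; [|lra].
          unfold Rdiv in Ha. rewrite Rmult_assoc, Rinv_l, Rmult_1_r in Ha by lra. lra. }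
        assert (alpha * (INR k - INR B) * (1 - p) >= 0).
        { apply Rle_ge, Rmult_le_pos; [apply Rmult_le_pos|]; lra. }
        assert (INR k * (p - alpha * (1 - 2 * p)) >= 0).
        { apply Rle_ge, Rmult_le_pos; lra. }
        assert (alpha * (1 - p) >= 0) by (apply Rle_ge, Rmult_le_pos; lra).
        nra.
      * assert (alpha * (1 - p) * (1 - INR B) >= 0).
        { replace (alpha * (1 - p) * (1 - INR B)) with ((- alpha) * (1 - p) * (INR B - 1)) by ring.
          apply Rle_ge, Rmult_le_pos; [apply Rmult_le_pos|]; lra. }
        assert (p * INR k * (1 + alpha) >= 0).
        { apply Rle_ge, Rmult_le_pos; [apply Rmult_le_pos|]; lra. }
        lra.
Qed.
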